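(* Let $\theta\in[\pi/4,\pi/3)$, $o=(0,0)$, $p=(1,0)$, and let $\mathbb{R}^2_-=\{(x,y)\mid y\leq 0\}$. Let $u,v\in\mathbb{R}^2_-$ be points with $0<x_u<1$, $|\varphi(uv)-\pi|<\pi/6$, and $|ou|,|pv|\in[|uv|,1)$. Define $$\mathcal{T}'=u+|uv|\,\mathrm{Rot}_{\varphi(uv)}\big(\mathcal{T}_\theta^-\big).$$ Then $\mathcal{T}'\setminus\mathcal{T}_\theta\subseteq\mathbb{R}^2_-$.
   Context: The curved trapezoid is the open set $\mathcal{T}_\theta=\{(x,y)\mid 0<x<1,\ 0<y<\sin\theta,\ x^2+y^2<1,\ (x-1)^2+y^2<1\}$. For a set $\mathcal{O}\subset\mathbb{R}^2$: $\mathcal{O}^-$ is its reflection through the $x$-axis; $\mathrm{Rot}_{\gamma}(\mathcal{O})$ is its rotation by angle $\gamma$ counterclockwise about the origin; $\lambda\mathcal{O}=\{\lambda z\mid z\in\mathcal{O}\}$; $u+\mathcal{O}=\{u+z\mid z\in\mathcal{O}\}$. $x_u$ denotes the $x$-coordinate of $u$, and $\varphi(uv)$ is the polar angle (from the positive $x$-axis, modulo $2\pi$) of the vector $\overrightarrow{uv}$. *)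

(* Defs.v *)
From Stdlib Require Import Reals.
Open Scope R_scope.

Definition pt := (R * R)%type.
Definition region := pt -> Prop.

Definition curved_trapezoid (theta : R) : region := fun z =>
  let x := fst z in let y := snd z in
  0 < x < 1 /\ 0 < y < sin theta /\ x ^ 2 + y ^ 2 < 1 /\ (x - 1) ^ 2 + y ^ 2 < 1.

Definition reflect_x (O : region) : region := fun z => O (fst z, - snd z).

Definition rot_pt (g : R) (w : pt) : pt :=
  (cos g * fst w - sin g * snd w, sin g * fst w + cos g * snd w).

Definition Rot (g : R) (O : region) : region := fun z => exists w, O w /\ z = rot_pt g w.

Definition scale (l : R) (O : region) : region :=
  fun z => exists w, O w /\ z = (l * fst w, l * snd w).

Definition translate (u : pt) (O : region) : region :=
  fun z => exists w, O w /\ z = (fst u + fst w, snd u + snd w).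

Definition pdist (u v : pt) : R := sqrt ((fst v - fst u) ^ 2 + (snd v - snd u) ^ 2).

(* polar angle in [0, 2*PI) of the nonzero vector (a,b) *)
Definition polar_angle (a b : R) : R :=
  let r := sqrt (a ^ 2 + b ^ 2) in
  if Rle_dec 0 b then acos (a / r) else 2 * PI - acos (a / r).

Definition phi (u v : pt) : R := polar_angle (fst v - fst u) (snd v - snd u).

(* Main.v *)
Require Import Defs.
From Stdlib Require Import Reals Lra Psatz.
Open Scope R_scope.

Lemma mneg_l (x y : R) : x <= 0 -> 0 <= y -> x * y <= 0.
Proof. intros; nra. Qed.
Lemma mneg_r (x y : R) : 0 <= x -> y <= 0 -> x * y <= 0.
Proof. intros; nra. Qed.
Lemma mnn (x y : R) : x <= 0 -> y <= 0 -> 0 <= x * y.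
Proof. intros; nra. Qed.

Lemma trig_of_phi (dx dy : R) :
  0 < sqrt (dx ^ 2 + dy ^ 2) ->
  sqrt (dx ^ 2 + dy ^ 2) * cos (polar_angle dx dy) = dx /\
  sqrt (dx ^ 2 + dy ^ 2) * sin (polar_angle dx dy) = dy.
Proof.
  intros Hd. unfold polar_angle. set (d := sqrt (dx ^ 2 + dy ^ 2)) in *.
  assert (Hdd : d * d = dx ^ 2 + dy ^ 2).
  { unfold d. apply sqrt_sqrt. nra. }
  assert (Hb : -1 <= dx / d <= 1).
  { assert (dx <= d) by nra. assert (- d <= dx) by nra.
    split.
    - apply (Rmult_le_reg_r d); [lra|]. unfold Rdiv. rewrite Rmult_assoc, Rinv_l; lra.
    - apply (Rmult_le_reg_r d); [lra|]. unfold Rdiv. rewrite Rmult_assoc, Rinv_l; lra. }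
  assert (Hs : sqrt (1 - (dx / d)²) = Rabs dy / d).
  { replace (1 - (dx / d)²) with ((dy / d)²).
    - rewrite sqrt_Rsqr_abs. unfold Rdiv. rewrite Rabs_mult, Rabs_inv, (Rabs_right d) by lra. reflexivity.
    - unfold Rsqr. field_simplify_eq; [nra | lra]. }
  destruct (Rle_dec 0 dy) as [H|H].
  - rewrite cos_acos, sin_acos by exact Hb. rewrite Hs, Rabs_right by lra.
    split; field; lra.
  - rewrite cos_minus, sin_minus, cos_2PI, sin_2PI, cos_acos, sin_acos by exact Hb.
    rewrite Hs, Rabs_left by lra. split; field; lra.
Qed.

Lemma core (ux uy dx dy a b d S : R) :
  d * d = dx ^ 2 + dy ^ 2 -> 0 <= d ->
  uy <= 0 -> uy + dy <= 0 -> 0 < ux < 1 -> dx < 0 ->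
  d <= sqrt (ux ^ 2 + uy ^ 2) -> sqrt (ux ^ 2 + uy ^ 2) < 1 ->
  d <= sqrt ((ux + dx - 1) ^ 2 + (uy + dy) ^ 2) ->
  sqrt ((ux + dx - 1) ^ 2 + (uy + dy) ^ 2) < 1 ->
  0 < a < 1 -> 0 < b < S -> a ^ 2 + b ^ 2 < 1 -> (a - 1) ^ 2 + b ^ 2 < 1 ->
  0 < uy + a * dy - b * dx ->
  let zx := ux + a * dx + b * dy in let zy := uy + a * dy - b * dx in
  0 < zx < 1 /\ 0 < zy < S /\ zx ^ 2 + zy ^ 2 < 1 /\ (zx - 1) ^ 2 + zy ^ 2 < 1.
Proof.
  intros Hdd Hd0 Huy Hvy Hux Hdx Hou Hou1 Hpv Hpv1 Ha Hb Hab1 Hab2 Hzy zx zy.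
  assert (Hdp : 0 < d) by nra.
  assert (Ou : d * d <= ux ^ 2 + uy ^ 2).
  { rewrite <- (sqrt_sqrt (ux ^ 2 + uy ^ 2)) by nra.
    apply Rmult_le_compat; lra. }
  assert (Ou1 : ux ^ 2 + uy ^ 2 < 1).
  { rewrite <- (sqrt_sqrt (ux ^ 2 + uy ^ 2)) by nra.
    pose proof (sqrt_pos (ux ^ 2 + uy ^ 2)). nra. }
  assert (Pv : d * d <= (ux + dx - 1) ^ 2 + (uy + dy) ^ 2).
  { rewrite <- (sqrt_sqrt ((ux + dx - 1) ^ 2 + (uy + dy) ^ 2)) by nra.
    apply Rmult_le_compat; lra. }
  assert (Pv1 : (ux + dx - 1) ^ 2 + (uy + dy) ^ 2 < 1).
  { rewrite <- (sqrt_sqrt ((ux + dx - 1) ^ 2 + (uy + dy) ^ 2)) by nra.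
    pose proof (sqrt_pos ((ux + dx - 1) ^ 2 + (uy + dy) ^ 2)). nra. }
  assert (Zu : (zx - ux) ^ 2 + (zy - uy) ^ 2 = (a ^ 2 + b ^ 2) * (d * d)).
  { unfold zx, zy. rewrite Hdd. ring. }
  assert (Zv : (zx - (ux + dx)) ^ 2 + (zy - (uy + dy)) ^ 2 = ((a - 1) ^ 2 + b ^ 2) * (d * d)).
  { unfold zx, zy. rewrite Hdd. ring. }
  assert (Ezx : zx = ux + a * dx + b * dy) by reflexivity.
  assert (Ezy : zy = uy + a * dy - b * dx) by reflexivity.
  clearbody zx zy.
  assert (Hdd2 : 0 < d * d) by nra.
  assert (Zu' : (zx - ux) ^ 2 + (zy - uy) ^ 2 < d * d) by (rewrite Zu; nra).
  assert (Zv' : (zx - (ux + dx)) ^ 2 + (zy - (uy + dy)) ^ 2 < d * d) by (rewrite Zv; nra).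
  assert (Hzy0 : 0 < zy) by lra.
  assert (E1 : (zy - uy) ^ 2 >= uy ^ 2).
  { assert (zy * (zy - 2 * uy) >= 0) by (apply Rle_ge; apply Rmult_le_pos; lra). lra. }
  assert (E2 : (zy - (uy + dy)) ^ 2 >= (uy + dy) ^ 2).
  { assert (zy * (zy - 2 * (uy + dy)) >= 0) by (apply Rle_ge; apply Rmult_le_pos; lra). lra. }
  assert (Zx0 : 0 < zx).
  { assert (zx * (zx - 2 * ux) < 0) by lra.
    destruct (Rle_lt_dec zx 0) as [h|h]; [|exact h].
    assert (zx * (zx - 2 * ux) >= 0) by (apply Rle_ge; apply mnn; lra). lra. }
  assert (Vx : 0 < ux + dx).
  { destruct (Rle_lt_dec (ux + dx) 0) as [h|h]; [|exact h].
    assert ((ux + dx) * (ux + dx - 2) >= 0) by (apply Rle_ge; apply mnn; lra).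
    assert ((uy + dy) ^ 2 >= 0) by (apply Rle_ge; apply pow2_ge_0). lra. }
  assert (Zx1 : zx < 1).
  { assert ((zx - 1) * (zx - 2 * (ux + dx) + 1) < 0) by lra.
    destruct (Rle_lt_dec 1 zx) as [h|h]; [|exact h].
    assert ((zx - 1) * (zx - 2 * (ux + dx) + 1) >= 0) by (apply Rle_ge; apply Rmult_le_pos; lra). lra. }
  assert (Hd1 : d < 1).
  { destruct (Rle_lt_dec 1 d) as [h|h]; [|exact h].
    assert (1 <= d * d) by (apply (Rle_trans _ (1 * 1)); [lra| apply Rmult_le_compat; lra]). lra. }
  assert (Hdx' : - dx <= d).
  { destruct (Rle_lt_dec (- dx) d) as [h|h]; [exact h|].
    assert (d * d < (- dx) * (- dx)) by nra.
    assert (dy ^ 2 >= 0) by (apply Rle_ge; apply pow2_ge_0). lra. }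
  assert (Zys : zy < S).
  { assert (zy <= - b * dx).
    { rewrite Ezy.
      assert ((1 - a) * uy <= 0) by (apply mneg_r; lra).
      assert (a * (uy + dy) <= 0) by (apply mneg_r; lra). lra. }
    assert (b * (- dx) <= b * d) by (apply Rmult_le_compat_l; lra).
    assert (b * d < b * 1) by (apply Rmult_lt_compat_l; lra). lra. }
  split; [lra|]. split; [lra|]. split.
  - assert (zx ^ 2 + zy ^ 2 < 1 - 2 * (ux + dx) * (1 - zx) + 2 * zy * (uy + dy)) by lra.
    assert (0 <= (ux + dx) * (1 - zx)) by (apply Rmult_le_pos; lra).
    assert (zy * (uy + dy) <= 0) by (apply mneg_r; lra). lra.
  - assert ((zx - 1) ^ 2 + zy ^ 2 < 1 - 2 * (1 - ux) * zx + 2 * zy * uy) by lra.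
    assert (0 <= (1 - ux) * zx) by (apply Rmult_le_pos; lra).
    assert (zy * uy <= 0) by (apply mneg_r; lra). lra.
Qed.

Theorem lemma6 (theta : R) (u v : pt) :
  PI / 4 <= theta < PI / 3 ->
  snd u <= 0 -> snd v <= 0 ->
  0 < fst u < 1 ->
  Rabs (phi u v - PI) < PI / 6 ->
  pdist u v <= pdist (0, 0) u < 1 ->
  pdist u v <= pdist (1, 0) v < 1 ->
  forall z : pt,
    translate u (scale (pdist u v) (Rot (phi u v) (reflect_x (curved_trapezoid theta)))) z ->
    ~ curved_trapezoid theta z ->
    snd z <= 0.
Proof.
  intros Hth Huy Hvy Hux Hphi Hou Hpv z Htr Hnot.
  destruct u as [ux uy]; destruct v as [vx vy]; cbn [fst snd] in *.
  destruct Htr as [w1 [[w2 [[w3 [HT ->]] ->]] ->]].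
  destruct w3 as [a b']. unfold reflect_x, curved_trapezoid in HT. cbn [fst snd] in HT.
  unfold pdist, phi, rot_pt in *. cbn [fst snd] in *.
  set (dx := vx - ux) in *. set (dy := vy - uy) in *.
  replace ((ux - 0) ^ 2 + (uy - 0) ^ 2) with (ux ^ 2 + uy ^ 2) in Hou by ring.
  replace ((vx - 1) ^ 2 + (vy - 0) ^ 2) with ((ux + dx - 1) ^ 2 + (uy + dy) ^ 2) in Hpv
    by (unfold dx, dy; ring).
  apply Rnot_lt_le; intro Hgt.
  pose proof (sqrt_pos (dx ^ 2 + dy ^ 2)) as Hd0.
  destruct (Req_dec (sqrt (dx ^ 2 + dy ^ 2)) 0) as [Hd|Hd].
  { rewrite Hd in Hgt. lra. }
  destruct (trig_of_phi dx dy) as [Hc Hs]; [lra|].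
  assert (Hcn : cos (polar_angle dx dy) < 0).
  { apply cos_lt_0; apply Rabs_def2 in Hphi; lra. }
  assert (Hdd : sqrt (dx ^ 2 + dy ^ 2) * sqrt (dx ^ 2 + dy ^ 2) = dx ^ 2 + dy ^ 2)
    by (apply sqrt_sqrt; nra).
  set (d := sqrt (dx ^ 2 + dy ^ 2)) in *.
  set (al := polar_angle dx dy) in *.
  assert (Hdx : dx < 0).
  { rewrite <- Hc. assert (0 < d) by lra. nra. }
  assert (Ez : (ux + d * (cos al * a - sin al * b'), uy + d * (sin al * a + cos al * b'))
             = (ux + a * dx + (- b') * dy, uy + a * dy - (- b') * dx)).
  { f_equal; rewrite <- Hc, <- Hs; ring. }
  apply Hnot. unfold curved_trapezoid. rewrite Ez. cbn [fst snd].
  assert (Hgt' : 0 < uy + a * dy - (- b') * dx).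
  { replace (uy + a * dy - - b' * dx) with (uy + d * (sin al * a + cos al * b'))
      by (rewrite <- Hc, <- Hs; ring). exact Hgt. }
  destruct HT as [Ha [Hb [H1 H2]]].
  exact (core ux uy dx dy a (- b') d (sin theta) Hdd Hd0 Huy ltac:(unfold dy in *; lra)
    Hux Hdx (proj1 Hou) (proj2 Hou) (proj1 Hpv) (proj2 Hpv) Ha Hb H1 H2 Hgt').
Qed.
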